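(* Consider the continuous-time plant $\dot x=f(x,u)$, $x\in\mathbb{R}^n$, $u\in\mathbb{R}^m$, under zero-order hold and possibly nonuniform sampling, fed back with a control law $U:\mathbb{R}^n\times\mathbb{R}^q\times\mathbb{R}_{>0}\to\mathbb{R}^m$, yielding the exact closed-loop model $\bar F^e(x,e,T)=F^e(x,U(x,e,T),T)$. Assume: (A1) $f$ is locally Lipschitz in $x$ uniformly in $u$: for all compact $\mathcal{X}\subset\mathbb{R}^n$, $\mathcal{U}\subset\mathbb{R}^m$ there is $L>0$ with $|f(x,u)-f(y,u)|\le L|x-y|$ for $x,y\in\mathcal{X}$, $u\in\mathcal{U}$; (A2) $f$ is locally bounded: for every $M,C_u\ge0$ there exists $C_f(M,C_u)>0$, nondecreasing in each variable, with $|f(x,u)|\le C_f$ for $|x|\le M$, $|u|\le C_u$; (A3) $U$ is small-time locally uniformly bounded: for every $M,E\ge0$ there exist $T^u(M,E)>0$ (nonincreasing in each variable) and $C_u(M,E)>0$ (nondecreasing in each variable) with $|U(x,e,T)|\le C_u$ for all $|x|\le M$, $|e|\le E$, $T\in(0,T^u)$. Suppose further that: (i) there exists $\phi\in\mathcal{K}_\infty$ such that for every $E\ge0$ there exists $T^i(E)>0$ such that $|f(0,U(0,e,T))|\le\phi(|e|)$ for all $|e|\le E$, $T\in(0,T^i)$; (ii) for every $M,E\ge0$ there exist $K(M,E)>0$ and $T^{ii}(M,E)>0$, with $K$ nondecreasing and $T^{ii}$ nonincreasing in each variable, such that $|f(x^a,U(x^a,e,T))-f(x^b,U(x^b,e,T))|\le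 K|x^a-x^b|$ for all $|x^a|,|x^b|\le M$, $|e|\le E$, $T\in(0,T^{ii})$. Let $F^{RK}$ be any explicit and consistent Runge-Kutta model for $\dot x=f(x,u)$ and $\bar F^{RK}(x,e,T):=F^{RK}(x,U(x,e,T),T)$. Then the pair $(\bar F^{RK},\bar F^e)$ is REPC.
   Context: $F^e(\xi,u,T)$ denotes the exact discrete-time model: the value at time $T$ of the solution of $\dot x=f(x,u)$ with constant input $u$ starting from $x(0)=\xi$. An $s$-stage explicit Runge-Kutta model is $F^{RK}(x,u,T):=x+T\sum_{i=1}^s b_i f(y_i,u)$, where $y_1=x$ and $y_i=x+T\sum_{j=1}^{i-1}a_{ij}f(y_j,u)$ for $i=2,\dots,s$, with real coefficients $a_{ij},b_i$; it is consistent if $\sum_{i=1}^s b_i=1$. $\mathcal{K}_\infty$: continuous, strictly increasing, unbounded functions $\mathbb{R}_{\ge0}\to\mathbb{R}_{\ge0}$ vanishing at $0$. REPC: a model $\bar F^a$ is Robustly Equilibrium-Preserving Consistent with $\bar F^b$ (and the pair $(\bar F^a,\bar F^b)$ is called REPC) if there exists $\phi\in\mathcal{K}_\infty$ such that for each $M,E\ge0$ there exist constants $K>0$, $T^*>0$ and $\rho\in\mathcal{K}_\infty$ with $|\bar F^a(x^a,e,T)-\bar F^b(x^b,e,T)|\le(1+KT)|x^a-x^b|+T\rho(T)(\max\{|x^a|,|x^b|\}+\phi(|e|))$ for all $|x^a|,|x^b|\le M$, $|e|\le E$, $T\in(0,T^* )$. *)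

(* Defs.v *)
From HB Require Import structures.
From mathcomp Require Import all_boot all_order all_algebra.
From mathcomp Require Import all_classical all_reals all_analysis.
Set Implicit Arguments. Unset Strict Implicit. Unset Printing Implicit Defensive.
Import Order.TTheory GRing.Theory Num.Theory.
Import numFieldNormedType.Exports.
Local Open Scope classical_set_scope.
Local Open Scope ring_scope.

Section Defs.
Variable R : realType.

Definition enorm (k : nat) (v : 'rV[R]_k) : R :=
  Num.sqrt (\sum_(i < k) (v ord0 i) ^+ 2).

Definition Kinf (phi : R -> R) : Prop :=
  [/\ {within [set r : R | 0 <= r], continuous phi},
      (forall r s : R, 0 <= r -> r < s -> phi r < phi s),
      phi 0 = 0 &
      (forall c : R, exists r : R, 0 <= r /\ c < phi r)].

Variables (n m q : nat).

Definition is_solution (f : 'rV[R]_n -> 'rV[R]_m -> 'rV[R]_n)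
  (xi : 'rV[R]_n) (u : 'rV[R]_m) (T : R) (x : R -> 'rV[R]_n) : Prop :=
  [/\ x 0 = xi,
      {within [set t : R | 0 <= t <= T], continuous x} &
      (forall t : R, 0 < t < T -> is_derive t (1 : R) x (f (x t) u))].

(* exact discrete-time model F^e(xi,u,T) = x(T) (defined when a solution exists
   on [0,T]; an arbitrary value xi otherwise) *)
Definition exact_model (f : 'rV[R]_n -> 'rV[R]_m -> 'rV[R]_n)
  (xi : 'rV[R]_n) (u : 'rV[R]_m) (T : R) : 'rV[R]_n :=
  match pselect (exists x, is_solution f xi u T x) with
  | left h => (projT1 (cid h)) T
  | right _ => xi
  end.

(* stages y_1,...,y_k (indexed 0..k-1) of an explicit RK scheme with
   coefficients a i j (only j < i used) *)
Fixpoint rk_stages (f : 'rV[R]_n -> 'rV[R]_m -> 'rV[R]_n) (a : nat -> nat -> R)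
  (x : 'rV[R]_n) (u : 'rV[R]_m) (T : R) (k : nat) : seq 'rV[R]_n :=
  match k with
  | 0%N => [::]
  | k'.+1 => let ys := rk_stages f a x u T k' in
      rcons ys (x + T *: \sum_(j < k') (a k' j *: f (nth 0 ys j) u))
  end.

Definition rk_model (f : 'rV[R]_n -> 'rV[R]_m -> 'rV[R]_n) (s : nat)
  (a : nat -> nat -> R) (b : nat -> R)
  (x : 'rV[R]_n) (u : 'rV[R]_m) (T : R) : 'rV[R]_n :=
  x + T *: \sum_(i < s) (b i *: f (nth 0 (rk_stages f a x u T s) i) u).

Definition rk_consistent (s : nat) (b : nat -> R) : Prop :=
  \sum_(i < s) b i = 1.

Definition REPC (Fa Fb : 'rV[R]_n -> 'rV[R]_q -> R -> 'rV[R]_n) : Prop :=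
  exists phi : R -> R, Kinf phi /\
    forall M E : R, 0 <= M -> 0 <= E ->
      exists (K Ts : R) (rho : R -> R), 0 < K /\ 0 < Ts /\ Kinf rho /\
        forall (xa xb : 'rV[R]_n) (e : 'rV[R]_q) (T : R),
          enorm xa <= M -> enorm xb <= M -> enorm e <= E -> 0 < T < Ts ->
          enorm (Fa xa e T - Fb xb e T) <=
            (1 + K * T) * enorm (xa - xb) +
            T * rho T * (Num.max (enorm xa) (enorm xb) + phi (enorm e)).

End Defs.

(* Main.v *)
Require Import Defs.
From HB Require Import structures.
From mathcomp Require Import all_boot all_order all_algebra.
From mathcomp Require Import all_classical all_reals all_analysis.
From mathcomp Require Import ring lra.
Import Order.TTheory GRing.Theory Num.Theory.
Import numFieldNormedType.Exports.
Local Open Scope classical_set_scope.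
Local Open Scope ring_scope.

Set Implicit Arguments. Unset Strict Implicit. Unset Printing Implicit Defensive.


Section Enorm.
Variable R : realType.
Variable n : nat.
Implicit Types v w : 'rV[R]_n.

Definition l1 v : R := \sum_(i < n) `|v ord0 i|.

Lemma enorm_ge0 v : 0 <= enorm v.
Proof. exact: sqrtr_ge0. Qed.

Lemma sumsq_ge0 v : 0 <= \sum_(i < n) (v ord0 i) ^+ 2.
Proof. by apply: sumr_ge0 => i _; exact: sqr_ge0. Qed.

Lemma enorm_sq v : enorm v ^+ 2 = \sum_(i < n) (v ord0 i) ^+ 2.
Proof. by rewrite /enorm sqr_sqrtr // sumsq_ge0. Qed.

Lemma l1_ge0 v : 0 <= l1 v.
Proof. by apply: sumr_ge0 => i _. Qed.

Lemma le_enorm_sq v x : 0 <= x -> \sum_(i < n) (v ord0 i) ^+ 2 <= x ^+ 2 -> enorm v <= x.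
Proof.
move=> x0 H; rewrite -(ger0_norm x0) -sqrtr_sqr /enorm ler_sqrt //; exact: sqr_ge0.
Qed.

Lemma coord_le_enorm v i : `|v ord0 i| <= enorm v.
Proof.
rewrite -(sqrtr_sqr (v ord0 i)) /enorm ler_sqrt; last exact: sumsq_ge0.
rewrite (bigD1 i) //= lerDl; apply: sumr_ge0 => j _; exact: sqr_ge0.
Qed.

Lemma enorm_le_l1 v : enorm v <= l1 v.
Proof.
apply: le_enorm_sq; first exact: l1_ge0.
rewrite expr2 /l1 mulr_suml; apply: ler_sum => i _.
have -> : v ord0 i ^+ 2 = `|v ord0 i| * `|v ord0 i|.
  by rewrite -normrM -expr2 ger0_norm // sqr_ge0.
apply: ler_wpM2l => //.
rewrite (bigD1 i) //= lerDl; exact: sumr_ge0.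
Qed.

Lemma l1_le_enorm v : l1 v <= n%:R * enorm v.
Proof.
apply: le_trans (ler_sum _ (fun i _ => coord_le_enorm v i)) _.
by rewrite sumr_const card_ord mulr_natl.
Qed.

Lemma l1D v w : l1 (v + w) <= l1 v + l1 w.
Proof.
rewrite /l1 -big_split /=; apply: ler_sum => i _; rewrite mxE; exact: ler_normD.
Qed.

Lemma l1N v : l1 (- v) = l1 v.
Proof. by apply: eq_bigr => i _; rewrite mxE normrN. Qed.

Lemma enorm0 : enorm (0 : 'rV[R]_n) = 0.
Proof.
rewrite /enorm (eq_bigr (fun _ => 0)) ?big1 ?sqrtr0 // => i _; by rewrite mxE expr0n.
Qed.

Lemma enormN v : enorm (- v) = enorm v.
Proof. by rewrite /enorm; congr Num.sqrt; apply: eq_bigr => i _; rewrite mxE sqrrN. Qed.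

Lemma enormZ c v : enorm (c *: v) = `|c| * enorm v.
Proof.
rewrite /enorm (eq_bigr (fun i => c ^+ 2 * (v ord0 i) ^+ 2)); last first.
  by move=> i _; rewrite mxE exprMn.
by rewrite -mulr_sumr sqrtrM ?sqr_ge0 // sqrtr_sqr.
Qed.

Lemma enormB v w : enorm (v - w) = enorm (w - v).
Proof. by rewrite -enormN opprB. Qed.

Lemma cauchy_schwarz v w :
  \sum_(i < n) v ord0 i * w ord0 i <= enorm v * enorm w.
Proof.
set a := enorm v; set b := enorm w.
have a0 : 0 <= a by exact: enorm_ge0.
have b0 : 0 <= b by exact: enorm_ge0.
have [a_eq0|a_gt0] := eqVneq a 0.
  rewrite a_eq0 mul0r big1 // => i _.
  have := coord_le_enorm v i; rewrite -/a a_eq0 normr_le0 => /eqP ->; by rewrite mul0r.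
have [b_eq0|b_gt0] := eqVneq b 0.
  rewrite b_eq0 mulr0 big1 // => i _.
  have := coord_le_enorm w i; rewrite -/b b_eq0 normr_le0 => /eqP ->; by rewrite mulr0.
have ap : 0 < a by rewrite lt_def a_gt0.
have bp : 0 < b by rewrite lt_def b_gt0.
set k := b / a.
have kp : 0 < k by rewrite divr_gt0.
have H i : 2 * (v ord0 i * w ord0 i) <= k * (v ord0 i) ^+ 2 + k^-1 * (w ord0 i) ^+ 2.
  have : 0 <= (k * v ord0 i - w ord0 i) ^+ 2 by exact: sqr_ge0.
  move=> h.
  have e : k * (k * (v ord0 i) ^+ 2 + k^-1 * (w ord0 i) ^+ 2) - k * (2 * (v ord0 i * w ord0 i)) = (k * v ord0 i - w ord0 i) ^+ 2.
    by field; rewrite gt_eqF.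
  rewrite -(ler_pM2l kp) -subr_ge0 e //.
have S : \sum_(i < n) 2 * (v ord0 i * w ord0 i) <= \sum_(i < n) (k * (v ord0 i) ^+ 2 + k^-1 * (w ord0 i) ^+ 2).
  by apply: ler_sum => i _; exact: H.
rewrite -mulr_sumr big_split /= -!mulr_sumr -!enorm_sq -/a -/b in S.
have e2 : k * a ^+ 2 + k^-1 * b ^+ 2 = 2 * (a * b).
  by rewrite /k; field; rewrite gt_eqF.
rewrite e2 in S.
by rewrite -(ler_pM2l (ltr0Sn _ 1)).
Qed.

Lemma enormD v w : enorm (v + w) <= enorm v + enorm w.
Proof.
apply: le_enorm_sq; first by rewrite addr_ge0 // enorm_ge0.
rewrite (eq_bigr (fun i => (v ord0 i) ^+ 2 + (w ord0 i) ^+ 2 + 2 * (v ord0 i * w ord0 i))); last first.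
  by move=> i _; rewrite mxE; ring.
rewrite !big_split /= -mulr_sumr -!enorm_sq.
have := cauchy_schwarz v w; set c := \sum_(i < n) _ => h.
have -> : (enorm v + enorm w) ^+ 2 = enorm v ^+ 2 + enorm w ^+ 2 + 2 * (enorm v * enorm w) by ring.
by rewrite lerD2l ler_pM2l.
Qed.

Lemma enormB_le v w : enorm (v - w) <= enorm v + enorm w.
Proof. by rewrite (le_trans (enormD _ _)) // enormN. Qed.

Lemma enorm_tri3 u v w : enorm (u - w) <= enorm (u - v) + enorm (v - w).
Proof. by rewrite (le_trans _ (enormD _ _)) // addrA subrK. Qed.

Lemma enorm_sum (I : finType) (F : I -> 'rV[R]_n) :
  enorm (\sum_i F i) <= \sum_i enorm (F i).
Proof.
elim/big_ind2 : _ => //.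
  by rewrite enorm0.
move=> x1 x2 y1 y2 h1 h2; exact: le_trans (enormD _ _) (lerD h1 h2).
Qed.

Lemma enorm_row (c : 'I_n -> R) : enorm (\row_i c i) <= \sum_i `|c i|.
Proof.
apply: le_trans (enorm_le_l1 _) _; by rewrite /l1; apply: ler_sum => i _; rewrite mxE.
Qed.

Lemma enorm_le_norm_sum v : enorm v <= \sum_(i < n) `|v ord0 i|.
Proof. exact: enorm_le_l1. Qed.

End Enorm.


Section Ana.
Variable R : realType.

Lemma near_lt (t d : R) : 0 < d -> \forall s \near t, `|t - s| < d.
Proof. move=> d0; apply/nbhs_ballP; exists d => // s /=; by rewrite /ball /=. Qed.

Lemma lip_cont (g : R -> R) (La : R) :
  (forall s t, `|g s - g t| <= La * `|s - t|) -> continuous g.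
Proof.
move=> H t; apply/cvgrPdist_le => e e0.
have P1 : 0 < `|La| + 1 by rewrite ltr_pwDr.
have P : 0 < e / (`|La| + 1) by rewrite divr_gt0.
near=> s.
apply: le_trans (H t s) _.
have hs : `|t - s| < e / (`|La| + 1) by near: s; exact: near_lt.
apply: le_trans (_ : (`|La| + 1) * `|t - s| <= e).
  apply: ler_wpM2r => //; apply: le_trans (ler_norm _) _; by rewrite lerDl.
by rewrite -ler_pdivlMl // mulrC ltW.
Unshelve. all: by end_near. Qed.

Lemma row_cont n (h : 'I_n -> R -> R) t :
  (forall i, {for t, continuous (h i)}) ->
  {for t, continuous (fun s => \row_i h i s : 'rV[R]_n)}.
Proof.
move=> H; apply/cvgrPdist_le => e e0.
near=> s.
rewrite [leLHS]/Num.Def.normr/= mx_normrE (bigmax_le _ (ltW e0))//= => -[i j] _.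
rewrite !mxE /=.
move: j; near: s; apply: filter_forall => j.
exact: (cvgrPdist_le _ _).1 (H j) e e0.
Unshelve. all: by end_near. Qed.

Lemma coord_le_mxnorm n (v : 'rV[R]_n) i : `|v ord0 i| <= `|v|.
Proof.
rewrite [leRHS]/Num.Def.normr/= mx_normrE.
apply: le_trans; last exact: (le_bigmax _ _ (ord0, i)).
by [].
Qed.

Lemma comp_within n (A : set R) (x : R -> 'rV[R]_n) i :
  {within A, continuous x} -> {within A, continuous (fun s => x s ord0 i)}.
Proof.
move=> H.
have := @within_continuous_comp _ _ _ A x (fun v : 'rV[R]_n => v ord0 i).
apply => // v _; exact: coord_continuous.
Qed.

Lemma comp_derive n (z : R -> 'rV[R]_n) (t : R) (d : 'rV[R]_n) (i : 'I_n) :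
  is_derive t (1 : R) z d -> is_derive t 1 (fun s => z s ord0 i) (d ord0 i).
Proof.
move=> [dz Dz].
have dzi := (derivable_mxP z t 1).1 dz ord0 i.
apply: DeriveDef => //.
by rewrite -Dz derive_mx // mxE.
Qed.

Lemma row_derive n (h : 'I_n -> R -> R) (dh : 'I_n -> R) (t : R) :
  (forall i, is_derive t (1 : R) (h i) (dh i)) ->
  is_derive t (1 : R) (fun s => \row_i h i s : 'rV[R]_n) (\row_i dh i).
Proof.
move=> H.
have E j : (fun x => (\row_i h i x : 'rV[R]_n) ord0 j) = h j.
  by apply/funext => s; rewrite mxE.
have D : derivable (fun s => \row_i h i s : 'rV[R]_n) t 1.
  apply/derivable_mxP => i j.
  have -> : i = ord0 by apply/val_inj; case: i => -[].
  by rewrite E; case: (H j).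
apply: DeriveDef => //.
rewrite derive_mx //; apply/matrixP => i j; rewrite !mxE.
have -> : i = ord0 by apply/val_inj; case: i => -[].
by rewrite E; case: (H j).
Qed.

Lemma mvt_l1 n (z z' : R -> 'rV[R]_n) (w : 'rV[R]_n) t B :
  0 <= t -> {within `[0, t], continuous z} ->
  (forall s, 0 < s < t -> is_derive s (1 : R) z (z' s)) ->
  (forall s, 0 < s < t -> enorm (z' s - w) <= B) ->
  l1 (z t - z 0 - t *: w) <= n%:R * B * t.
Proof.
move=> t0 zc zd zb.
have [t_eq0|tp] := eqVneq t 0.
  rewrite t_eq0 subrr scale0r subr0 mulr0 /l1 big1 // => i _; by rewrite mxE normr0.
have tp' : 0 < t by rewrite lt_def tp t0.
apply: le_trans (_ : \sum_(i < n) B * t <= _); last first.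
  by rewrite sumr_const card_ord mulr_natl mulrnAl.
apply: ler_sum => i _.
rewrite !mxE.
have hd : forall s, s \in `]0, t[ -> is_derive s (1 : R) (fun s => z s ord0 i) (z' s ord0 i).
  move=> s; rewrite in_itv /= => hs; apply: comp_derive; exact: zd.
have [c cin ceq] := @MVT R (fun s => z s ord0 i) (fun s => z' s ord0 i) 0 t tp' hd (comp_within (i:=i) zc).
rewrite /= in ceq.
rewrite ceq subr0 [t * _]mulrC -mulrBl normrM (ger0_norm t0).
apply: ler_wpM2r => //.
move: cin; rewrite in_itv /= => cin.
apply: le_trans (zb c cin).
by move: (coord_le_enorm (z' c - w) i); rewrite !mxE.
Qed.

Lemma cont_induction (g : R -> R) (T c : R) : 0 < c -> 0 <= T ->
  (forall tau, 0 <= tau <= T -> forall eps, 0 < eps ->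
     exists2 d, 0 < d & forall s, 0 <= s <= T -> `|s - tau| < d -> g s < g tau + eps) ->
  (forall t, 0 <= t <= T -> (forall s, 0 <= s < t -> g s <= c) -> g t <= c / 2) ->
  forall t, 0 <= t <= T -> g t <= c / 2.
Proof.
move=> c0 T0 gc H.
have c2 : c / 2 <= c by lra.
pose S := [set t | 0 <= t <= T /\ forall s, 0 <= s <= t -> g s <= c].
have S0 : S 0.
  split; first by rewrite lexx T0.
  move=> s /andP[s0 s0']; have -> : s = 0 by apply/le_anti; rewrite s0 s0'.
  apply: le_trans (H 0 _ _) c2; first by rewrite lexx T0.
  by move=> s' /andP[a b]; exfalso; lra.
have Sub : ubound S T by move=> t [/andP[_ h] _].
have hs : has_sup S by split; [exists 0 | exists T].
set tau := sup S.
have tau0 : 0 <= tau := sup_upper_bound hs S0.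
have tauT : tau <= T := ge_sup (ex_intro _ 0 S0) Sub.
have A : forall s, 0 <= s < tau -> g s <= c.
  move=> s /andP[s0 st].
  have ts : 0 < tau - s by rewrite subr_gt0.
  have [e Se lt] := sup_adherent ts hs.
  apply: Se.2; rewrite s0 /=; rewrite -/tau in lt; apply: ltW; lra.
have gtau : g tau <= c / 2 by apply: H => //; rewrite tau0 tauT.
have tauE : tau = T.
  apply/eqP; rewrite eq_le tauT /= leNgt; apply/negP => tT.
  have h1 : 0 <= tau <= T by rewrite tau0 tauT.
  have h2 : 0 < c / 2 by lra.
  have [d d0 hd] := gc tau h1 (c / 2) h2.
  set t' := Num.min (tau + d / 2) T.
  have t'1 : t' <= tau + d / 2 by rewrite ge_min lexx.
  have t'2 : t' <= T by rewrite ge_min lexx orbT.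
  have t'3 : tau < t' by rewrite lt_min tT andbT; lra.
  have St' : S t'.
    split; first by apply/andP; split => //; lra.
    move=> s /andP[s0 st'].
    have [slt|sge] := ltP s tau; first by apply: A; rewrite s0.
    apply: ltW; apply: lt_le_trans (hd s _ _) _; last by lra.
      by apply/andP; split => //; lra.
    rewrite ger0_norm; lra.
  have := sup_upper_bound hs St'; rewrite -/tau; lra.
move=> t /andP[t0 tT]; apply: H; first by rewrite t0 tT.
move=> s /andP[s0 st]; apply: A; rewrite s0 /= tauE; lra.
Qed.

Lemma l1_usc n (x : R -> 'rV[R]_n) (x0 : 'rV[R]_n) (T : R) :
  {within `[0, T], continuous x} ->
  forall tau, 0 <= tau <= T -> forall eps, 0 < eps ->
    exists2 d, 0 < d & forall s, 0 <= s <= T -> `|s - tau| < d ->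
      l1 (x s - x0) < l1 (x tau - x0) + eps.
Proof.
move=> xc tau htau eps e0.
have Atau : (`[0, T]%classic : set R) tau by rewrite /= in_itv /=.
have := (subspace_continuousP _ _).1 xc tau Atau.
move/cvgrPdist_lt => /(_ (eps / (n%:R + 1))) [].
  by rewrite divr_gt0 // ltr_pwDr.
move=> /= d d0 hd.
exists d => // s hs hst.
have hs' : (`[0, T]%classic : set R) s by rewrite /= in_itv /=.
have := hd s _ hs'.
move=> /(_ _) h.
have {h} h : `|x tau - x s| < eps / (n%:R + 1).
  apply: h; rewrite /ball /= distrC; exact: hst.
have -> : x s - x0 = (x tau - x0) + (x s - x tau) by rewrite [RHS]addrC addrA subrK.
apply: le_lt_trans (l1D _ _) _; rewrite ltrD2l.
apply: le_lt_trans (_ : \sum_(i < n) eps / (n%:R + 1) < eps).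
  apply: ler_sum => i _; rewrite mxE; apply: ltW; apply: le_lt_trans h.
  by rewrite -normrN opprB; have := coord_le_mxnorm (x s - x tau) i; rewrite mxE.
rewrite sumr_const card_ord -[eps / _ *+ n]mulr_natr -mulrA gtr_pMr // mulrC.
by rewrite ltr_pdivrMr ?mul1r ?ltrDl // ltr_pwDr.
Qed.

End Ana.


Section Integ.
Variable R : realType.
Notation mu := (@lebesgue_measure R).

Definition Iv (h : R -> R) (t : R) : R := \int[mu]_(s in `[0, t]) h s.

Lemma int_seg (h : R -> R) (a b : R) : continuous h -> mu.-integrable `[a, b] (EFin \o h).
Proof.
move=> hc; apply: continuous_compact_integrable; first exact: segment_compact.
exact: continuous_subspaceT.
Qed.

Lemma mu_seg (a b : R) : a <= b -> fine (mu `[a, b]) = b - a.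
Proof.
move=> ab; rewrite lebesgue_measure_itv /= lte_fin.
case: ltP => h; first by rewrite -EFinD.
have e : a = b by apply/le_anti; rewrite ab h.
by rewrite e subrr.

Qed.

Lemma seg_bound (h : R -> R) (a b B : R) : continuous h -> a <= b ->
  (forall s, a <= s <= b -> `|h s| <= B) ->
  `|\int[mu]_(s in `[a, b]) h s| <= B * (b - a).
Proof.
move=> hc ab hB.
have ic (c : R) : mu.-integrable `[a, b] (EFin \o (fun _ : R => c)).
  by apply: int_seg; exact: cst_continuous.
have ih := int_seg a b hc.
have m : measurable (`[a, b]%classic : set R) by exact: measurable_itv.
have up : \int[mu]_(s in `[a, b]) h s <= \int[mu]_(s in `[a, b]) B.
  apply: le_Rintegral => // s; rewrite /= in_itv /= => hs.
  exact: le_trans (ler_norm _) (hB s hs).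
have lo : \int[mu]_(s in `[a, b]) (- B) <= \int[mu]_(s in `[a, b]) h s.
  apply: le_Rintegral => // s; rewrite /= in_itv /= => hs.
  by rewrite lerNl; apply: le_trans (hB s hs); rewrite -normrN ler_norm.
rewrite !Rintegral_cst // mu_seg // in up lo.
by rewrite ler_norml up andbT -mulNr.
Qed.

Lemma Iv_neg (h : R -> R) t : t < 0 -> Iv h t = 0.
Proof.
move=> t0; rewrite /Iv set_itv_ge ?Rintegral_set0 //.
by rewrite bnd_simp -ltNge.
Qed.

Lemma Iv0 (h : R -> R) : Iv h 0 = 0.
Proof. by rewrite /Iv set_itv1 Rintegral_set1. Qed.

Lemma Iv_bound (h : R -> R) t B : continuous h -> 0 <= t ->
  (forall s, 0 <= s <= t -> `|h s| <= B) -> `|Iv h t| <= B * t.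
Proof. by move=> hc t0 hB; rewrite -[t in B * t]subr0; exact: seg_bound. Qed.

Lemma IvB (h1 h2 : R -> R) t : continuous h1 -> continuous h2 ->
  Iv h1 t - Iv h2 t = Iv (fun s => h1 s - h2 s) t.
Proof.
move=> c1 c2; rewrite /Iv [RHS]RintegralB //; exact: int_seg.
Qed.

Lemma Iv_diff (h : R -> R) t t' : continuous h -> 0 <= t <= t' ->
  Iv h t' - Iv h t = \int[mu]_(s in `[t, t']) h s.
Proof.
move=> hc /andP[t0 tt'].
rewrite /Iv Rintegral_itvB //.
- rewrite Rintegral_itv_obnd_cbnd //.
  apply: integrableS (int_seg t t' hc) => //; exact: subset_itv_oc_cc.
- exact: int_seg.
Qed.

Lemma Iv_lip (h : R -> R) B : continuous h -> (forall s, `|h s| <= B) ->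
  forall t t', `|Iv h t - Iv h t'| <= B * `|t - t'|.
Proof.
move=> hc hB.
have B0 : 0 <= B by apply: le_trans (hB 0).
have key t t' : t <= t' -> `|Iv h t - Iv h t'| <= B * `|t - t'|.
  move=> tt'; rewrite distrC [`|t - t'|]distrC (ger0_norm (_ : 0 <= t' - t)); last by rewrite subr_ge0.
  have [t'0|t'0] := ltP t' 0.
    rewrite !Iv_neg ?subrr ?normr0 ?mulr_ge0 ?subr_ge0 //; exact: le_lt_trans t'0.
  have [t0|t0] := ltP t 0.
    rewrite (Iv_neg h t0) subr0; apply: le_trans (Iv_bound hc t'0 (fun s _ => hB s)) _.
    by apply: ler_wpM2l => //; lra.
  rewrite Iv_diff ?t0 //; apply: seg_bound => // s _; exact: hB.
move=> t t'; have [tt'|tt'] := leP t t'; first exact: key.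
by rewrite distrC [`|t - t'|]distrC; apply: key; exact: ltW.
Qed.

Lemma Iv_derive (h : R -> R) (t T : R) : continuous h -> 0 < t < T ->
  is_derive t (1 : R) (Iv h) (h t).
Proof.
move=> hc /andP[t0 tT].
have [d e] := @continuous_FTC1_closed R h 0 t T tT (int_seg 0 T hc) t0 (hc t).
apply: DeriveDef; first exact: d.
by rewrite -derive1E.
Qed.

End Integ.


Section Geo.
Variable R : realType.

Lemma nat_le_pow2 k : (k%:R : R) <= 2 ^+ k.
Proof.
elim: k => [|k IH]; first by rewrite expr0 ler01.
rewrite exprS -natr1.
have : (1 : R) <= 2 ^+ k by apply: exprn_ege1; rewrite ler1n.
lra.
Qed.

Lemma geo_le0 (z A : R) : 0 <= A -> (forall k, z <= A / 2 ^+ k) -> z <= 0.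
Proof.
move=> A0 H; rewrite leNgt; apply/negP => z0.
have Az : 0 <= A / z by rewrite divr_ge0 // ltW.
have := archi_boundP Az.
set k := Num.Def.archi_bound _ => hk.
have := H k.
have p : 0 < (2 : R) ^+ k by apply: exprn_gt0.
rewrite ler_pdivlMr // => h.
have := nat_le_pow2 k.
rewrite ltr_pdivrMr // in hk.
move=> h2.
have : z * k%:R <= z * 2 ^+ k by apply: ler_wpM2l => //; exact: ltW.
rewrite mulrC in hk. lra.
Qed.

Definition glim (a : nat -> R) (D : R) : R :=
  sup (range (fun k => a k - 2 * D / 2 ^+ k)).

Lemma homo_nat_le (c : nat -> R) : (forall k, c k <= c k.+1) ->
  forall k m, (k <= m)%N -> c k <= c m.
Proof.
move=> H k m km; rewrite -(subnKC km); elim: (m - k)%N => [|j IH]; first by rewrite addn0.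
by apply: le_trans IH _; rewrite addnS.
Qed.

Lemma glim_spec (a : nat -> R) D : 0 <= D ->
  (forall k, `|a k.+1 - a k| <= D / 2 ^+ k) ->
  forall k, `|glim a D - a k| <= 2 * D / 2 ^+ k.
Proof.
move=> D0 H.
pose e k : R := 2 * D / 2 ^+ k.
have e0 k : 0 <= e k by rewrite /e divr_ge0 // ?mulr_ge0 // exprn_ge0.
have eS k : e k = e k.+1 + D / 2 ^+ k.
  rewrite /e exprS; field.
  by rewrite expf_neq0 // pnatr_eq0.
pose c k := a k - e k.
pose b k := a k + e k.
have Hk k : - (D / 2 ^+ k) <= a k.+1 - a k <= D / 2 ^+ k by rewrite -ler_norml.
have cinc k : c k <= c k.+1.
  by rewrite /c (eS k); have := Hk k; lra.
have bdec k : - b k <= - b k.+1.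
  by rewrite /b (eS k); have := Hk k; lra.
have cb k m : c k <= b m.
  have [km|mk] := leqP k m.
    apply: le_trans (homo_nat_le cinc km) _; rewrite /c /b; have := e0 m; lra.
  have := homo_nat_le bdec (ltnW mk); rewrite lerN2 => h.
  apply: le_trans h; rewrite /c /b; have := e0 k; lra.
have ne : range c !=set0 by exists (c 0%N); exists 0%N.
have hs : has_sup (range c).
  by split => //; exists (b 0%N) => _ [m _ <-]; exact: cb.
move=> k.
have l1 : c k <= glim a D by apply: sup_upper_bound => //; exists k.
have l2 : glim a D <= b k by apply: ge_sup => // _ [m _ <-]; exact: cb.
rewrite ler_norml; rewrite /c /b -/(e k) in l1 l2 *; apply/andP; split; lra.
Qed.

Definition clamp (lo hi a : R) : R := if a < lo then lo else if hi < a then hi else a.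

Lemma clamp_lip lo hi a b : lo <= hi -> `|clamp lo hi a - clamp lo hi b| <= `|a - b|.
Proof.
move=> lh.
have h1 := ler_norm (a - b).
have h2 : b - a <= `|a - b| by rewrite distrC ler_norm.
rewrite /clamp; case: (ltP a lo) => ?; case: (ltP hi a) => ?; case: (ltP b lo) => ?;
  case: (ltP hi b) => ?; rewrite ler_norml; apply/andP; split; lra.
Qed.

Lemma clamp_in lo hi a : lo <= hi -> lo <= clamp lo hi a <= hi.
Proof. move=> lh; rewrite /clamp; case: (ltP a lo) => ?; case: (ltP hi a) => ?; apply/andP; split; lra. Qed.

Lemma clamp_id lo hi a : lo <= a <= hi -> clamp lo hi a = a.
Proof.
move=> /andP[h1 h2]; rewrite /clamp; case: (ltP a lo) => ?; first lra.
case: (ltP hi a) => ? //; lra.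
Qed.

End Geo.

Unset Implicit Arguments. Set Strict Implicit.


Section Exist.
Variable R : realType.
Variable n : nat.
Variable g : 'rV[R]_n -> 'rV[R]_n.
Variable xi : 'rV[R]_n.
Variables L C r T : R.
Hypothesis r0 : 0 < r.
Hypothesis L0 : 0 <= L.
Hypothesis C0 : 0 <= C.
Hypothesis T0 : 0 <= T.

Definition inbox (v : 'rV[R]_n) := forall i, `|v ord0 i - xi ord0 i| <= r.

Hypothesis glip : forall v w, inbox v -> inbox w -> enorm (g v - g w) <= L * enorm (v - w).
Hypothesis gbd : forall v, inbox v -> enorm (g v) <= C.
Hypothesis TC : T * C <= r.
Hypothesis TL : n%:R * T * L <= 1 / 2.

Definition Pi (v : 'rV[R]_n) : 'rV[R]_n :=
  \row_i clamp (xi ord0 i - r) (xi ord0 i + r) (v ord0 i).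

Lemma Pi_in v : inbox (Pi v).
Proof.
move=> i; rewrite mxE.
have lh : xi ord0 i - r <= xi ord0 i + r by rewrite lerD2l -subr_ge0 opprK addr_ge0 // ltW.
have := @clamp_in R (xi ord0 i - r) (xi ord0 i + r) (v ord0 i) lh.
move=> /andP[h1 h2]; rewrite ler_norml; apply/andP; split; lra.
Qed.

Lemma Pi_id v : inbox v -> Pi v = v.
Proof.
move=> H; apply/rowP => i; rewrite mxE clamp_id //.
have := H i; rewrite ler_norml => /andP[h1 h2]; apply/andP; split; lra.
Qed.

Lemma Pi_lip v w : enorm (Pi v - Pi w) <= enorm (v - w).
Proof.
rewrite /enorm ler_sqrt; last exact: sumsq_ge0.
apply: ler_sum => i _; rewrite !mxE.
rewrite -(real_normK (num_real _)) -[X in _ <= X](real_normK (num_real _)).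
have lh : xi ord0 i - r <= xi ord0 i + r by rewrite lerD2l -subr_ge0 opprK addr_ge0 // ltW.
have h := @clamp_lip R (xi ord0 i - r) (xi ord0 i + r) (v ord0 i) (w ord0 i) lh.
by rewrite ler_sqr ?normr_ge0.
Qed.

Definition G v := g (Pi v).

Lemma Glip v w : enorm (G v - G w) <= L * enorm (v - w).
Proof.
apply: le_trans (glip _ _ (Pi_in v) (Pi_in w)) _.
by apply: ler_wpM2l => //; exact: Pi_lip.
Qed.

Lemma Gbd v : enorm (G v) <= C.
Proof. exact: gbd _ (Pi_in v). Qed.

Definition hh (y : R -> 'rV[R]_n) (i : 'I_n) (s : R) : R := G (y s) ord0 i.

Definition P (y : R -> 'rV[R]_n) (t : R) : 'rV[R]_n :=
  \row_i (xi ord0 i + Iv (hh y i) t).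

Definition LipC (y : R -> 'rV[R]_n) (La : R) :=
  forall i s t, `|y s ord0 i - y t ord0 i| <= La * `|s - t|.

Lemma hh_cont y La : 0 <= La -> LipC y La -> forall i, continuous (hh y i).
Proof.
move=> La0 H i; apply: (@lip_cont R _ (L * (n%:R * La))) => s t.
rewrite /hh.
have -> : G (y s) ord0 i - G (y t) ord0 i = (G (y s) - G (y t)) ord0 i by rewrite !mxE.
apply: le_trans (coord_le_enorm _ _) _.
apply: le_trans (Glip _ _) _.
rewrite -mulrA; apply: ler_wpM2l => //.
apply: le_trans (enorm_le_l1 _) _.
apply: le_trans (_ : \sum_(j < n) La * `|s - t| <= _).
  by apply: ler_sum => j _; rewrite !mxE.
by rewrite sumr_const card_ord mulr_natl mulrnAl.
Qed.

Lemma hh_bd y i s : `|hh y i s| <= C.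
Proof. apply: le_trans (coord_le_enorm _ _) (Gbd _). Qed.

Lemma P_lip y La : 0 <= La -> LipC y La -> LipC (P y) C.
Proof.
move=> La0 H i s t; rewrite !mxE opprD addrACA subrr add0r.
exact: Iv_lip (hh_cont y La La0 H i) (fun s => hh_bd y i s) s t.
Qed.

Lemma P0 y : P y 0 = xi.
Proof. by apply/rowP => i; rewrite mxE Iv0 addr0. Qed.

Lemma P_contr y1 y2 d : LipC y1 C -> LipC y2 C ->
  (forall s, 0 <= s <= T -> enorm (y1 s - y2 s) <= d) ->
  forall t, 0 <= t <= T -> enorm (P y1 t - P y2 t) <= d / 2.
Proof.
move=> H1 H2 Hd t /andP[t0 tT].
have d0 : 0 <= d by apply: le_trans (enorm_ge0 _) (Hd 0 _); rewrite lexx T0.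
apply: le_trans (enorm_le_l1 _) _.
apply: le_trans (_ : \sum_(i < n) L * d * T <= _); last first.
  rewrite sumr_const card_ord -mulr_natl.
  have : n%:R * T * L * d <= 1 / 2 * d by apply: ler_wpM2r.
  by rewrite mulrC; lra.
apply: ler_sum => i _.
have c1 := hh_cont y1 C C0 H1 i.
have c2 := hh_cont y2 C C0 H2 i.
rewrite !mxE opprD addrACA subrr add0r IvB //.
apply: le_trans (Iv_bound _ t0 _) _.
- by move=> x; exact: (continuousB (c1 x) (c2 x)).
- move=> s hs; rewrite /hh.
  have -> : G (y1 s) ord0 i - G (y2 s) ord0 i = (G (y1 s) - G (y2 s)) ord0 i by rewrite !mxE.
  apply: le_trans (coord_le_enorm _ _) _.
  apply: le_trans (Glip _ _) _.
  apply: ler_wpM2l => //; apply: Hd.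
  by move: hs => /andP[? ?]; apply/andP; split => //; lra.
- by apply: ler_wpM2l => //; apply: mulr_ge0.
Qed.

Definition Y (k : nat) : R -> 'rV[R]_n := iter k P (fun _ => xi).

Lemma Y_lip k : LipC (Y k) C.
Proof.
elim: k => [|k IH].
  move=> i s t; rewrite /Y /= subrr normr0; apply: mulr_ge0 => //.
exact: (P_lip (Y k) C C0 IH).
Qed.

Definition D := n%:R * C * T.

Lemma D0 : 0 <= D.
Proof. by rewrite /D !mulr_ge0. Qed.

Lemma Y_step k t : 0 <= t <= T -> enorm (Y k.+1 t - Y k t) <= D / 2 ^+ k.
Proof.
elim: k t => [|k IH] t ht.
  rewrite expr0 divr1.
  have -> : Y 0 t = xi by [].
  apply: le_trans (enorm_le_l1 _) _.
  apply: le_trans (_ : \sum_(i < n) C * T <= _); last first.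
    by rewrite sumr_const card_ord /D -mulrA mulr_natl.
  apply: ler_sum => i _.
  rewrite /Y /= /P !mxE addrC addKr.
  move: ht => /andP[t0 tT].
  apply: le_trans (Iv_bound _ t0 (fun s _ => hh_bd _ i s)) _.
    exact: (hh_cont (Y 0) C C0 (Y_lip 0) i).
  by apply: ler_wpM2l.
have -> : Y k.+2 t - Y k.+1 t = P (Y k.+1) t - P (Y k) t by [].
apply: le_trans (P_contr _ _ _ (Y_lip k.+1) (Y_lip k) IH t ht) _.
by rewrite exprS invfM mulrA mulrAC.
Qed.

Definition Yl (t : R) (i : 'I_n) : R := glim (fun k => Y k t ord0 i) D.

Lemma Yl_spec t i k : 0 <= t <= T -> `|Yl t i - Y k t ord0 i| <= 2 * D / 2 ^+ k.
Proof.
move=> ht; apply: (glim_spec D0) => j.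
apply: le_trans (Y_step j t ht).
by move: (coord_le_enorm (Y j.+1 t - Y j t) i); rewrite !mxE.
Qed.

Definition ct (t : R) : R := clamp 0 T t.

Lemma ct_in t : 0 <= ct t <= T.
Proof. exact: clamp_in. Qed.

Definition Yinf (t : R) : 'rV[R]_n := \row_i Yl (ct t) i.

Lemma Yl_lip a b i : 0 <= a <= T -> 0 <= b <= T ->
  `|Yl a i - Yl b i| <= C * `|a - b|.
Proof.
move=> ha hb; rewrite -subr_le0.
apply: (geo_le0 (A := 4 * D)); first by rewrite mulr_ge0 // D0.
move=> k.
have h1 := Yl_spec a i k ha.
have h2 := Yl_spec b i k hb.
have h3 := Y_lip k i a b.
have e : Yl a i - Yl b i = (Yl a i - Y k a ord0 i) + (Y k a ord0 i - Y k b ord0 i) - (Yl b i - Y k b ord0 i).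
  by ring.
rewrite e.
have h4 := ler_normB (Yl a i - Y k a ord0 i + (Y k a ord0 i - Y k b ord0 i)) (Yl b i - Y k b ord0 i).
have h5 := ler_normD (Yl a i - Y k a ord0 i) (Y k a ord0 i - Y k b ord0 i).
have -> : 4 * D / 2 ^+ k = 2 * D / 2 ^+ k + 2 * D / 2 ^+ k by rewrite -mulrDl -mulrDl; congr (_ / _); ring.
lra.
Qed.

Lemma Yinf_lip : LipC Yinf C.
Proof.
move=> i s t; rewrite !mxE.
apply: le_trans (Yl_lip _ _ i (ct_in s) (ct_in t)) _.
apply: ler_wpM2l => //; apply: clamp_lip; exact: T0.
Qed.

Lemma Yinf_close k t : 0 <= t <= T -> enorm (Yinf t - Y k t) <= n%:R * (2 * D / 2 ^+ k).
Proof.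
move=> ht.
apply: le_trans (enorm_le_l1 _) _.
apply: le_trans (_ : \sum_(i < n) (2 * D / 2 ^+ k) <= _); last first.
  by rewrite sumr_const card_ord -[_ *+ n]mulr_natl.
apply: ler_sum => i _; rewrite !mxE /ct clamp_id //.
exact: Yl_spec.
Qed.

Definition xsol := P Yinf.

Lemma xsol_eq t : 0 <= t <= T -> xsol t = Yinf t.
Proof.
move=> ht; apply/rowP => i.
apply/eqP; rewrite -subr_eq0 -normr_le0.
apply: (geo_le0 (A := n%:R * D + D)); first by rewrite addr_ge0 ?mulr_ge0 ?D0.
move=> k.
have h1 : enorm (xsol t - Y k.+1 t) <= n%:R * (2 * D / 2 ^+ k) / 2.
  exact: (P_contr _ _ _ Yinf_lip (Y_lip k) (fun s hs => Yinf_close k s hs) t ht).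
have h1' := le_trans (coord_le_enorm (xsol t - Y k.+1 t) i) h1.
have h2 := Yl_spec t i k.+1 ht.
clear h1; move: h1' h2; move: (xsol t) (Y k.+1 t) => X Z h1 h2.
rewrite !mxE in h1; rewrite !mxE /ct clamp_id //.
have p : 0 < (2 : R) ^+ k by apply: exprn_gt0.
have e1 : n%:R * (2 * D / 2 ^+ k) / 2 = n%:R * D / 2 ^+ k by field; rewrite gt_eqF.
have e2 : 2 * D / 2 ^+ k.+1 = D / 2 ^+ k by rewrite exprS; field; rewrite gt_eqF.
have e3 : (n%:R * D + D) / 2 ^+ k = n%:R * D / 2 ^+ k + D / 2 ^+ k by rewrite mulrDl.
rewrite e1 in h1; rewrite e2 in h2; rewrite e3.
have -> : X ord0 i - Yl t i = (X ord0 i - Z ord0 i) - (Yl t i - Z ord0 i) by ring.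
have h4 := ler_normB (X ord0 i - Z ord0 i) (Yl t i - Z ord0 i).
lra.
Qed.

Lemma xsol_box t : 0 <= t <= T -> inbox (xsol t).
Proof.
move=> /andP[t0 tT] i; rewrite /xsol /P !mxE addrC addKr.
apply: le_trans (Iv_bound _ t0 (fun s _ => hh_bd _ i s)) _.
  exact: (hh_cont Yinf C C0 Yinf_lip i).
apply: le_trans TC; rewrite mulrC; exact: ler_wpM2r.
Qed.

Theorem exists_sol : exists x : R -> 'rV[R]_n,
  [/\ x 0 = xi, {within `[0, T], continuous x} &
      forall t, 0 < t < T -> is_derive t (1 : R) x (g (x t))].
Proof.
exists xsol; split.
- exact: P0.
- apply: continuous_subspaceT => t.
  apply: row_cont => i.
  apply: (@lip_cont R _ C) => a b.
  by have := P_lip Yinf C C0 Yinf_lip i a b; rewrite !mxE.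
- move=> t /andP[t0 tT].
  have ht : 0 <= t <= T by rewrite !ltW.
  have -> : g (xsol t) = \row_i hh Yinf i t.
    apply/rowP => i; rewrite mxE /hh -xsol_eq // /G Pi_id //; exact: xsol_box.
  apply: row_derive => i.
  have htt : 0 < t < T by rewrite t0 tT.
  have := is_deriveD (is_derive_cst (xi ord0 i) t (1 : R)) (Iv_derive (hh_cont Yinf C C0 Yinf_lip i) htt).
  by rewrite add0r.
Qed.

End Exist.


Section ExactErr.
Variable R : realType.
Variables n m : nat.
Variable f : 'rV[R]_n -> 'rV[R]_m -> 'rV[R]_n.
Variable u : 'rV[R]_m.
Variable xb : 'rV[R]_n.
Variables M L Cf T : R.
Hypothesis M0 : 0 <= M.
Hypothesis L0 : 0 <= L.
Hypothesis Cf0 : 0 <= Cf.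
Hypothesis T0 : 0 < T.
Hypothesis hlip : forall x y, enorm x <= M + 1 -> enorm y <= M + 1 ->
  enorm (f x u - f y u) <= L * enorm (x - y).
Hypothesis hbd : forall x, enorm x <= M + 1 -> enorm (f x u) <= Cf.
Hypothesis hxb : enorm xb <= M.
Hypothesis time1 : T * ((n%:R + 1) * Cf) <= 1.
Hypothesis time2 : 4 * n%:R * T * L <= 1.
Hypothesis time3 : 8 * n%:R * T * Cf <= 1.

Let Fb := enorm (f xb u).

Ltac rs := have M0' : 0 <= M := M0; have L0' : 0 <= L := L0; have Cf0' : 0 <= Cf := Cf0;
  have T0' : 0 < T := T0; have hxb' : enorm xb <= M := hxb;
  have t1' : T * ((n%:R + 1) * Cf) <= 1 := time1; have t2' : 4 * n%:R * T * L <= 1 := time2;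
  have t3' : 8 * n%:R * T * Cf <= 1 := time3.

Lemma Fb_le : Fb <= Cf.
Proof. rs; apply: hbd; lra. Qed.

Lemma ball_near x : enorm (x - xb) <= 1 -> enorm x <= M + 1.
Proof.
rs; move=> h; have -> : x = xb + (x - xb) by rewrite addrC subrK.
apply: le_trans (enormD _ _) _; lra.
Qed.

Lemma set_cc : [set t : R | 0 <= t <= T] = `[0, T]%classic.
Proof. by apply/seteqP; split => t /=; rewrite in_itv. Qed.

Lemma sol_exists : exists x, is_solution f xb u T x.
Proof.
rs; pose r : R := 1 / (n%:R + 1).
have n1 : 0 < n%:R + 1 :> R by rewrite ltr_pwDr.
have r0 : 0 < r by rewrite divr_gt0.
have ibox v : inbox R n xb r v -> enorm v <= M + 1.
  move=> hv; apply: ball_near; apply: le_trans (enorm_le_l1 _) _.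
  apply: le_trans (_ : \sum_(i < n) r <= _).
    by apply: ler_sum => i _; rewrite !mxE; exact: hv.
  rewrite sumr_const card_ord -mulr_natl /r.
  by rewrite mul1r ler_pdivrMr // mul1r; lra.
have glip (p q : 'rV[R]_n) : inbox R n xb r p -> inbox R n xb r q ->
    enorm ((fun y => f y u) p - (fun y => f y u) q) <= L * enorm (p - q).
  by move=> hv hw; apply: hlip; apply: ibox.
have gbd (p : 'rV[R]_n) : inbox R n xb r p -> enorm ((fun y => f y u) p) <= Cf.
  by move=> hv; apply: hbd; apply: ibox.
have TC : T * Cf <= r.
  by rewrite /r ler_pdivlMr // mulrC mulrA; lra.
have TL : n%:R * T * L <= 1 / 2 by lra.
have [x [x0 xc xd]] := @exists_sol R n (fun v => f v u) xb L Cf r T r0 L0 Cf0 (ltW T0) glip gbd TC TL.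
exists x; split => //.
Qed.

Lemma sol_bound x : is_solution f xb u T x ->
  forall t, 0 <= t <= T -> l1 (x t - xb) <= 2 * n%:R * T * Fb.
Proof.
rs; case=> x0 xc xd.
rewrite set_cc in xc.
have Fb0 : 0 <= Fb by apply: enorm_ge0.
have key eps : 0 < eps -> eps <= 1 / 2 ->
    forall t, 0 <= t <= T -> l1 (x t - xb) <= (4 * n%:R * T * Fb + eps) / 2.
  move=> e0 e1.
  set c := 4 * n%:R * T * Fb + eps.
  have c0 : 0 < c by rewrite /c; apply: ltr_wpDl => //; rewrite !mulr_ge0 // ltW.
  have c1 : c <= 1.
    have : 4 * n%:R * T * Fb <= 4 * n%:R * T * Cf by apply: ler_wpM2l; [rewrite !mulr_ge0 // ltW|exact: Fb_le].
    rewrite /c; lra.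
  apply: (cont_induction (g := fun t => l1 (x t - xb))) => //.
  - exact: ltW.
  - exact: l1_usc.
  move=> t /andP[t0 tT] Hs.
  have Hd s : 0 < s < t -> is_derive s (1 : R) x (f (x s) u).
    move=> /andP[s0 st]; apply: xd; rewrite s0 /=; lra.
  have Hb s : 0 < s < t -> enorm (f (x s) u - 0) <= Fb + L * c.
    move=> /andP[s0 st]; rewrite subr0.
    have hs : l1 (x s - xb) <= c by apply: Hs; rewrite st ltW.
    have hs' : enorm (x s - xb) <= c := le_trans (enorm_le_l1 _) hs.
    have : enorm (f (x s) u - f xb u) <= L * enorm (x s - xb).
      apply: hlip; [apply: ball_near; lra | lra].
    have : L * enorm (x s - xb) <= L * c by apply: ler_wpM2l.
    have := enormD (f (x s) u - f xb u) (f xb u); rewrite subrK.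
    rewrite /Fb; lra.
  have xc' : {within `[0, t], continuous x}.
    apply: continuous_subspaceW xc => y /=; rewrite !in_itv /= => /andP[? ?].
    apply/andP; split => //; lra.
  have := mvt_l1 t0 xc' Hd Hb.
  rewrite scaler0 subr0 x0 => h; apply: le_trans h _.
  have : n%:R * (Fb + L * c) * t <= n%:R * (Fb + L * c) * T.
    by apply: ler_wpM2l => //; rewrite mulr_ge0 // addr_ge0 // mulr_ge0 // ltW.
  have : n%:R * T * L * c <= c / 4.
    have : 4 * n%:R * T * L * c <= 1 * c by apply: ler_wpM2r => //; exact: ltW.
    lra.
  rewrite /c; lra.
move=> t ht; apply/ler_addgt0Pr => e e0.
have e' : 0 < Num.min (2 * e) (1 / 2) by rewrite lt_min; apply/andP; split; lra.
have e1 : Num.min (2 * e) (1 / 2) <= 1 / 2 by rewrite ge_min lexx orbT.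
have e2 : Num.min (2 * e) (1 / 2) <= 2 * e by rewrite ge_min lexx.
have := key _ e' e1 t ht.
lra.
Qed.

Lemma exact_err : enorm (exact_model f xb u T - xb - T *: f xb u) <= 2 * n%:R ^+ 2 * L * T ^+ 2 * Fb.
Proof.
rs; rewrite /exact_model; case: pselect => [h|]; last by move/(_ sol_exists).
case: (cid h) => x hx /=.
have [x0 xc xd] := hx.
have xc' := xc; rewrite set_cc in xc'.
have Hd s : 0 < s < T -> is_derive s (1 : R) x (f (x s) u) by exact: xd.
have Hb s : 0 < s < T -> enorm (f (x s) u - f xb u) <= L * (2 * n%:R * T * Fb).
  move=> /andP[s0 sT].
  have hs' : l1 (x s - xb) <= 2 * n%:R * T * Fb by apply: (sol_bound x hx); rewrite !ltW.
  have hs'' : enorm (x s - xb) <= 2 * n%:R * T * Fb := le_trans (enorm_le_l1 _) hs'.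
  have hsmall : 2 * n%:R * T * Fb <= 1.
    have : 2 * n%:R * T * Fb <= 2 * n%:R * T * Cf by apply: ler_wpM2l; [rewrite !mulr_ge0 // ltW|exact: Fb_le].
    lra.
  apply: le_trans (hlip _ _ _ _) _.
  - by apply: ball_near; lra.
  - lra.
  by apply: ler_wpM2l.
have := mvt_l1 (ltW T0) xc' Hd Hb.
rewrite x0 => hm.
apply: le_trans (enorm_le_l1 _) _; apply: le_trans hm _.
rewrite le_eqVlt; apply/orP; left; apply/eqP; rewrite !expr2; ring.
Qed.

End ExactErr.


Definition SumA {R : realType} (s : nat) (a : nat -> nat -> R) : R :=
  \sum_(i < s) \sum_(j < i) `|a i j|.
Definition SumB {R : realType} (s : nat) (b : nat -> R) : R :=
  \sum_(i < s) `|b i|.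

Section RKErr.
Variable R : realType.
Variables n m : nat.
Variable f : 'rV[R]_n -> 'rV[R]_m -> 'rV[R]_n.
Variable u : 'rV[R]_m.
Variable x : 'rV[R]_n.
Variable s : nat.
Variable a : nat -> nat -> R.
Variable b : nat -> R.
Variables M L Cf T : R.
Hypothesis M0 : 0 <= M.
Hypothesis L0 : 0 <= L.
Hypothesis Cf0 : 0 <= Cf.
Hypothesis T0 : 0 <= T.
Hypothesis hlip : forall x y, enorm x <= M + 1 -> enorm y <= M + 1 ->
  enorm (f x u - f y u) <= L * enorm (x - y).
Hypothesis hbd : forall x, enorm x <= M + 1 -> enorm (f x u) <= Cf.
Hypothesis hx : enorm x <= M.
Hypothesis cons : \sum_(i < s) b i = 1.
Hypothesis time1 : 2 * T * SumA s a * Cf <= 1.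
Hypothesis time2 : 2 * L * T * SumA s a <= 1.

Let St k := rk_stages f a x u T k.
Let Y j := nth 0 (St s) j.
Let Fa := enorm (f x u).
Let Sa := SumA s a.
Let Sb := SumB s b.

Ltac rs2 := have M0' : 0 <= M := M0; have L0' : 0 <= L := L0; have Cf0' : 0 <= Cf := Cf0;
  have T0' : 0 <= T := T0; have hx' : enorm x <= M := hx;
  have t1' : 2 * T * Sa * Cf <= 1 := time1; have t2' : 2 * L * T * Sa <= 1 := time2.

Lemma size_st k : size (St k) = k.
Proof. by elim: k => [|k IH] //=; rewrite size_rcons IH. Qed.

Lemma nth_st k k' j : (j < k)%N -> (k <= k')%N -> nth 0 (St k') j = nth 0 (St k) j.
Proof.
move=> jk; elim: k' => [|k' IH]; first by rewrite leqn0 => /eqP e; rewrite e in jk.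
rewrite leq_eqVlt => /orP[/eqP <- //|]; rewrite ltnS => kk'.
rewrite /St /= nth_rcons -/(St k') size_st.
by rewrite (leq_trans jk kk') IH.
Qed.

Lemma stage_eq i : (i < s)%N ->
  Y i = x + T *: \sum_(j < i) (a i j *: f (Y j) u).
Proof.
move=> his.
rewrite /Y (nth_st i.+1 s i (ltnSn i) his) /St /= nth_rcons -/(St i) size_st ltnn eqxx.
congr (_ + _ *: _); apply: eq_bigr => j _.
by rewrite (nth_st i s j (ltn_ord j) (ltnW his)).
Qed.

Lemma Sa_ge0 : 0 <= Sa.
Proof. by apply: sumr_ge0 => i _; apply: sumr_ge0. Qed.

Lemma row_le_Sa i : (i < s)%N -> \sum_(j < i) `|a i j| <= Sa.
Proof.
move=> his; rewrite /Sa /SumA (bigD1 (Ordinal his)) //= lerDl.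
by apply: sumr_ge0 => k _; apply: sumr_ge0.
Qed.

Lemma stage_bound i : (i < s)%N -> enorm (Y i - x) <= 2 * T * Sa * Fa.
Proof.
rs2.
have Fa0 : 0 <= Fa by exact: enorm_ge0.
have FaC : Fa <= Cf by apply: hbd; lra.
have Sa0 := Sa_ge0.
suff H : forall k i, (i < k)%N -> (i < s)%N -> enorm (Y i - x) <= 2 * T * Sa * Fa.
  by move=> his; apply: (H i.+1).
elim=> [//|k IH] {}i ik his.
rewrite (stage_eq i his) addrC addKr enormZ (ger0_norm T0').
apply: le_trans (_ : T * \sum_(j < i) (`|a i j| * (Fa + L * (2 * T * Sa * Fa))) <= _).
  apply: ler_wpM2l => //; apply: le_trans (enorm_sum _) _.
  apply: ler_sum => j _; rewrite enormZ; apply: ler_wpM2l => //.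
  have js : (j < s)%N by apply: ltn_trans (ltn_ord j) his.
  have hj := IH j (leq_trans (ltn_ord j) ik) js.
  have hsm : 2 * T * Sa * Fa <= 1.
    have : 2 * T * Sa * Fa <= 2 * T * Sa * Cf by apply: ler_wpM2l; rewrite ?mulr_ge0.
    lra.
  have hyj : enorm (Y j) <= M + 1.
    have -> : Y j = x + (Y j - x) by rewrite addrC subrK.
    apply: le_trans (enormD _ _) _; lra.
  have := hlip (Y j) x hyj (_ : enorm x <= M + 1).
  move=> /(_ _) hl; have {}hl := hl ltac:(lra).
  have := enormD (f (Y j) u - f x u) (f x u); rewrite subrK => htri.
  have : L * enorm (Y j - x) <= L * (2 * T * Sa * Fa) by apply: ler_wpM2l.
  rewrite /Fa; lra.
rewrite -mulr_suml.
have h1 := row_le_Sa i his.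
have h2 : 0 <= Fa + L * (2 * T * Sa * Fa) by rewrite addr_ge0 // !mulr_ge0.
have : (\sum_(j < i) `|a i j|) * (Fa + L * (2 * T * Sa * Fa)) <= Sa * (Fa + L * (2 * T * Sa * Fa)).
  by apply: ler_wpM2r.
have : L * (2 * T * Sa * Fa) <= Fa.
  have -> : L * (2 * T * Sa * Fa) = (2 * L * T * Sa) * Fa by ring.
  have : 2 * L * T * Sa * Fa <= 1 * Fa by apply: ler_wpM2r.
  lra.
move=> hA hB.
have : Sa * (Fa + L * (2 * T * Sa * Fa)) <= Sa * (2 * Fa) by apply: ler_wpM2l => //; lra.
move=> hC.
have : T * ((\sum_(j < i) `|a i j|) * (Fa + L * (2 * T * Sa * Fa))) <= T * (Sa * (2 * Fa)).
  by apply: ler_wpM2l => //; lra.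
move=> hD; apply: le_trans hD _.
rewrite le_eqVlt; apply/orP; left; apply/eqP; ring.
Qed.

Lemma rk_err : enorm (rk_model f s a b x u T - x - T *: f x u) <= 2 * L * Sa * Sb * T ^+ 2 * Fa.
Proof.
rs2.
have Fa0 : 0 <= Fa by exact: enorm_ge0.
have Sa0 := Sa_ge0.
have e : rk_model f s a b x u T - x - T *: f x u = T *: \sum_(i < s) (b i *: (f (Y i) u - f x u)).
  rewrite /rk_model (addrC x) addrK -scalerBr; congr (_ *: _).
  rewrite [RHS](eq_bigr (fun i : 'I_s => b i *: f (Y i) u - b i *: f x u)); last by move=> i _; rewrite scalerBr.
  by rewrite sumrB -scaler_suml cons scale1r.
rewrite e enormZ (ger0_norm T0').
apply: le_trans (_ : T * \sum_(i < s) (`|b i| * (L * (2 * T * Sa * Fa))) <= _).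
  apply: ler_wpM2l => //; apply: le_trans (enorm_sum _) _.
  apply: ler_sum => i _; rewrite enormZ; apply: ler_wpM2l => //.
  have hi := stage_bound i (ltn_ord i).
  have hsm : 2 * T * Sa * Fa <= 1.
    have FaC : Fa <= Cf by apply: hbd; lra.
    have : 2 * T * Sa * Fa <= 2 * T * Sa * Cf by apply: ler_wpM2l; rewrite ?mulr_ge0.
    lra.
  have hyi : enorm (Y i) <= M + 1.
    have -> : Y i = x + (Y i - x) by rewrite addrC subrK.
    apply: le_trans (enormD _ _) _; lra.
  apply: le_trans (hlip _ _ hyi _) _; first lra.
  by apply: ler_wpM2l.
rewrite -mulr_suml /Sb /SumB.
rewrite le_eqVlt; apply/orP; left; apply/eqP; rewrite expr2; ring.
Qed.

End RKErr.


Lemma Kinf_lin (R : realType) (c : R) : 0 < c -> Kinf (fun t => c * t).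
Proof.
move=> c0; split.
- apply: continuous_subspaceT; apply: (@lip_cont R _ c) => s t.
  by rewrite -mulrBr normrM (gtr0_norm c0).
- by move=> r s _ rs; rewrite ltr_pM2l.
- by rewrite mulr0.
- move=> d; exists ((`|d| + 1) / c); split.
    by rewrite divr_ge0 // ?addr_ge0 // ltW.
  rewrite mulrC divfK ?gt_eqF //.
  apply: le_lt_trans (ler_norm d) _; by rewrite ltrDl.
Qed.

Lemma dec_gen {R : realType} {k : nat} (r e xa xb fa fb : 'rV[R]_k) (T : R) :
  r - e = (xa - xb) + T *: (fa - fb) + (r - xa - T *: fa) - (e - xb - T *: fb).
Proof. by apply/rowP => i; rewrite !mxE; ring. Qed.

Lemma Kinf_ge0 (R : realType) (phi : R -> R) : Kinf phi -> forall r, 0 <= r -> 0 <= phi r.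
Proof.
case=> _ inc p0 _ r r0; rewrite -p0.
have [->|rp] := eqVneq r 0; first by rewrite p0.
by apply: ltW; apply: inc => //; rewrite lt_def rp r0.
Qed.

Theorem theorem3 (R : realType) (n m q : nat)
  (f : 'rV[R]_n -> 'rV[R]_m -> 'rV[R]_n)
  (U : 'rV[R]_n -> 'rV[R]_q -> R -> 'rV[R]_m)
  (s : nat) (a : nat -> nat -> R) (b : nat -> R) :
  (* (A1) local Lipschitz in x uniformly in u *)
  (forall (X : set 'rV[R]_n) (Us : set 'rV[R]_m), compact X -> compact Us ->
     exists L : R, 0 < L /\ forall x y u, X x -> X y -> Us u ->
       enorm (f x u - f y u) <= L * enorm (x - y)) ->
  (* (A2) local boundedness *)
  (exists Cf : R -> R -> R,
     (forall M Cu, 0 <= M -> 0 <= Cu -> 0 < Cf M Cu) /\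
     (forall M M' Cu Cu', 0 <= M -> M <= M' -> 0 <= Cu -> Cu <= Cu' ->
        Cf M Cu <= Cf M' Cu') /\
     (forall M Cu, 0 <= M -> 0 <= Cu -> forall x u,
        enorm x <= M -> enorm u <= Cu -> enorm (f x u) <= Cf M Cu)) ->
  (* (A3) small-time locally uniform boundedness of U *)
  (exists Tu Cu : R -> R -> R,
     (forall M E, 0 <= M -> 0 <= E -> 0 < Tu M E /\ 0 < Cu M E) /\
     (forall M M' E E', 0 <= M -> M <= M' -> 0 <= E -> E <= E' ->
        Tu M' E' <= Tu M E /\ Cu M E <= Cu M' E') /\
     (forall M E, 0 <= M -> 0 <= E -> forall x e T,
        enorm x <= M -> enorm e <= E -> 0 < T < Tu M E ->
        enorm (U x e T) <= Cu M E)) ->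
  (* (i) *)
  (exists phi : R -> R, Kinf phi /\
     forall E, 0 <= E -> exists Ti : R, 0 < Ti /\
       forall e T, enorm e <= E -> 0 < T < Ti ->
         enorm (f 0 (U 0 e T)) <= phi (enorm e)) ->
  (* (ii) *)
  (exists K Tii : R -> R -> R,
     (forall M E, 0 <= M -> 0 <= E -> 0 < K M E /\ 0 < Tii M E) /\
     (forall M M' E E', 0 <= M -> M <= M' -> 0 <= E -> E <= E' ->
        K M E <= K M' E' /\ Tii M' E' <= Tii M E) /\
     (forall M E, 0 <= M -> 0 <= E -> forall xa xb e T,
        enorm xa <= M -> enorm xb <= M -> enorm e <= E -> 0 < T < Tii M E ->
        enorm (f xa (U xa e T) - f xb (U xb e T)) <= K M E * enorm (xa - xb))) ->
  (* explicit consistent RK model *)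
  rk_consistent s b ->
  REPC (fun x e T => rk_model f s a b x (U x e T) T)
       (fun x e T => exact_model f x (U x e T) T).
Proof.
move=> A1 [Cf [Cfp [_ Cfb]]] [Tu [Cu [TCp [_ TCb]]]] [phi [phiK Hi]]
  [Kf [Tii [KTp [_ KTb]]]] cons.
exists phi; split => // M E M0 E0.
have [Tu0 Cu0] := TCp M E M0 E0.
pose cu := Cu M E.
pose M1 := M + 1.
have M10 : 0 <= M1 by rewrite /M1; lra.
have cu0 : 0 <= cu := ltW Cu0.
pose cf := Cf M1 cu.
have cfp : 0 < cf := Cfp M1 cu M10 cu0.
have cX : compact [set v : 'rV[R]_n | forall i, (`[- M1, M1]%classic : set R) (v ord0 i)].
  by apply: (@rV_compact _ _ (fun _ => `[- M1, M1]%classic)) => i; exact: segment_compact.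
have cU : compact [set v : 'rV[R]_m | forall i, (`[- cu, cu]%classic : set R) (v ord0 i)].
  by apply: (@rV_compact _ _ (fun _ => `[- cu, cu]%classic)) => i; exact: segment_compact.
have [L [Lp HL]] := A1 _ _ cX cU.
have L0 : 0 <= L := ltW Lp.
have inbx (k : nat) (v : 'rV[R]_k) (B : R) : enorm v <= B ->
    forall i, (`[- B, B]%classic : set R) (v ord0 i).
  move=> h i; rewrite /= in_itv /= -ler_norml; exact: le_trans (coord_le_enorm v i) h.
have hlip uu : enorm uu <= cu -> forall x y, enorm x <= M + 1 -> enorm y <= M + 1 ->
    enorm (f x uu - f y uu) <= L * enorm (x - y).
  move=> hu x y hx hy; apply: HL; [exact: (inbx _ x M1 hx) | exact: (inbx _ y M1 hy) | exact: (inbx _ uu cu hu)].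
have hbd uu : enorm uu <= cu -> forall x, enorm x <= M + 1 -> enorm (f x uu) <= cf.
  by move=> hu x hx; apply: Cfb.
have [K0p Tii0p] := KTp M E M0 E0.
pose K0 := Kf M E.
have [Ti [Tip HTi]] := Hi E E0.
pose Sa := SumA s a.
pose Sb := SumB s b.
have Sa0 : 0 <= Sa by apply: sumr_ge0 => i _; apply: sumr_ge0.
have Sb0 : 0 <= Sb by apply: sumr_ge0.
pose Q := 2 * Sa * cf + 2 * L * Sa + (n%:R + 1) * cf + 4 * n%:R * L + 8 * n%:R * cf + 1.
have Qp : 0 < Q.
  rewrite /Q; have : 0 <= n%:R :> R by [].
  have : 0 <= Sa * cf by rewrite mulr_ge0 // ltW.
  have : 0 <= L * Sa by rewrite mulr_ge0.
  have : 0 <= n%:R * cf :> R by rewrite mulr_ge0 // ltW.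
  have : 0 <= n%:R * L :> R by rewrite mulr_ge0.
  move=> *; nra.
pose Ts := Num.min (Num.min (Tu M E) (Tii M E)) (Num.min Ti (1 / Q)).
pose c1 := (2 * L * Sa * Sb + 2 * n%:R ^+ 2 * L) * (K0 + 1) + 1.
have c1p : 0 < c1.
  rewrite /c1 ltr_pwDr // mulr_ge0 //; last by rewrite addr_ge0 // ltW.
  by rewrite addr_ge0 // !mulr_ge0.
exists K0, Ts, (fun T => c1 * T).
split => //; split.
  by rewrite /Ts !lt_min Tu0 Tii0p Tip divr_gt0.
split; first exact: Kinf_lin.
move=> xa xb e T hxa hxb he /andP[T0 TTs].
move: TTs; rewrite /Ts !lt_min => /andP[/andP[TTu TTii] /andP[TTi TQ]].
have TQ' : T * Q <= 1.
  by rewrite -ler_pdivlMr //; exact: ltW.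
have hT : 0 < T < Tu M E by rewrite T0 TTu.
pose ua := U xa e T.
pose ub := U xb e T.
have hua : enorm ua <= cu := TCb M E M0 E0 xa e T hxa he hT.
have hub : enorm ub <= cu := TCb M E M0 E0 xb e T hxb he hT.
have hTii : 0 < T < Tii M E by rewrite T0 TTii.
have hTi : 0 < T < Ti by rewrite T0 TTi.
have h00 : enorm (0 : 'rV[R]_n) <= M by rewrite enorm0.
have phi0 : 0 <= phi (enorm e) by apply: Kinf_ge0 => //; exact: enorm_ge0.
have hf0 := HTi e T he hTi.
pose mx := Num.max (enorm xa) (enorm xb).
have mxa : enorm xa <= mx by rewrite le_max lexx.
have mxb : enorm xb <= mx by rewrite le_max lexx orbT.
have xa0 : 0 <= enorm xa := enorm_ge0 xa.
have xb0 : 0 <= enorm xb := enorm_ge0 xb.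
pose W := mx + phi (enorm e).
have FaW : enorm (f xa ua) <= (K0 + 1) * W.
  have h1 := KTb M E M0 E0 xa 0 e T hxa h00 he hTii.
  rewrite subr0 in h1.
  have := enormD (f xa (U xa e T) - f 0 (U 0 e T)) (f 0 (U 0 e T)); rewrite subrK => h2.
  have : K0 * enorm xa <= K0 * mx by apply: ler_wpM2l => //; exact: ltW.
  rewrite /W /ua /K0 in h1 h2 *; nra.
have FbW : enorm (f xb ub) <= (K0 + 1) * W.
  have h1 := KTb M E M0 E0 xb 0 e T hxb h00 he hTii.
  rewrite subr0 in h1.
  have := enormD (f xb (U xb e T) - f 0 (U 0 e T)) (f 0 (U 0 e T)); rewrite subrK => h2.
  have : K0 * enorm xb <= K0 * mx by apply: ler_wpM2l => //; exact: ltW.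
  rewrite /W /ub /K0 in h1 h2 *; nra.
have hab := KTb M E M0 E0 xa xb e T hxa hxb he hTii.
have q1 : 0 <= 2 * Sa * cf by rewrite !mulr_ge0 // ltW.
have q2 : 0 <= 2 * L * Sa by rewrite !mulr_ge0.
have q3 : 0 <= (n%:R + 1) * cf by rewrite !mulr_ge0 // ?addr_ge0 // ltW.
have q4 : 0 <= 4 * n%:R * L by rewrite !mulr_ge0.
have q5 : 0 <= 8 * n%:R * cf by rewrite !mulr_ge0 // ltW.
have T0' : 0 <= T := ltW T0.
have tQ (z : R) : 0 <= z -> z <= Q -> T * z <= 1.
  by move=> z0 zQ; apply: le_trans TQ'; apply: ler_wpM2l.
have z1 : 2 * Sa * cf <= Q by rewrite /Q; lra.
have z2 : 2 * L * Sa <= Q by rewrite /Q; lra.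
have z3 : (n%:R + 1) * cf <= Q by rewrite /Q; lra.
have z4 : 4 * n%:R * L <= Q by rewrite /Q; lra.
have z5 : 8 * n%:R * cf <= Q by rewrite /Q; lra.
have t1 : 2 * T * SumA s a * cf <= 1.
  have := tQ _ q1 z1; rewrite /Sa => h; lra.
have t2 : 2 * L * T * SumA s a <= 1.
  have := tQ _ q2 z2; rewrite /Sa => h; lra.
have t3 : T * ((n%:R + 1) * cf) <= 1 by exact: tQ.
have t4 : 4 * n%:R * T * L <= 1.
  have := tQ _ q4 z4 => h; lra.
have t5 : 8 * n%:R * T * cf <= 1.
  have := tQ _ q5 z5 => h; lra.
have rkE := @rk_err R n m f ua xa s a b M L cf T M0 L0 (ltW cfp) T0' (hlip ua hua) (hbd ua hua) hxa cons t1 t2.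
have exE := @exact_err R n m f ub xb M L cf T M0 L0 (ltW cfp) T0 (hlip ub hub) (hbd ub hub) hxb t3 t4 t5.
rewrite -/Sa -/Sb in rkE.
set RK := rk_model f s a b xa ua T in rkE *.
set EX := exact_model f xb ub T in exE *.
rewrite (dec_gen RK EX xa xb (f xa ua) (f xb ub) T).
have e1 := enormD ((xa - xb) + T *: (f xa ua - f xb ub) + (RK - xa - T *: f xa ua)) (- (EX - xb - T *: f xb ub)).
have e2 := enormD ((xa - xb) + T *: (f xa ua - f xb ub)) (RK - xa - T *: f xa ua).
have e3 := enormD (xa - xb) (T *: (f xa ua - f xb ub)).
rewrite enormN in e1.
rewrite enormZ (ger0_norm T0') in e3.
have e4 : T * enorm (f xa ua - f xb ub) <= T * (K0 * enorm (xa - xb)) by apply: ler_wpM2l.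
have W0 : 0 <= W by rewrite /W addr_ge0 // (le_trans xa0 mxa).
have c0 : 0 <= 2 * L * Sa * Sb * T ^+ 2 by rewrite !mulr_ge0 // exprn_ge0.
have c0' : 0 <= 2 * n%:R ^+ 2 * L * T ^+ 2 by rewrite !mulr_ge0 // exprn_ge0.
have e5 : 2 * L * Sa * Sb * T ^+ 2 * enorm (f xa ua) <= 2 * L * Sa * Sb * T ^+ 2 * ((K0 + 1) * W) by apply: ler_wpM2l.
have e6 : 2 * n%:R ^+ 2 * L * T ^+ 2 * enorm (f xb ub) <= 2 * n%:R ^+ 2 * L * T ^+ 2 * ((K0 + 1) * W) by apply: ler_wpM2l.
have e7 : 0 <= T ^+ 2 * W by rewrite mulr_ge0 // exprn_ge0.
have e8 : T * (c1 * T) * W = (2 * L * Sa * Sb + 2 * n%:R ^+ 2 * L) * (K0 + 1) * (T ^+ 2 * W) + T ^+ 2 * W.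
  by rewrite /c1 expr2; ring.
have e9 : 2 * L * Sa * Sb * T ^+ 2 * ((K0 + 1) * W) + 2 * n%:R ^+ 2 * L * T ^+ 2 * ((K0 + 1) * W) = (2 * L * Sa * Sb + 2 * n%:R ^+ 2 * L) * (K0 + 1) * (T ^+ 2 * W).
  by ring.
rewrite -/mx -/W e8.
have e10 : (1 + K0 * T) * enorm (xa - xb) = enorm (xa - xb) + T * (K0 * enorm (xa - xb)) by ring.
rewrite e10.
lra.
Qed.
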